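(* Let $a,e\in\mathbb{R}$, $\omega>0$, and let $\alpha_i(t)$ ($i=1,\dots,4$) be scalar continuous functions (not necessarily odd). (i) Suppose $\alpha_3(t)$ is $\omega$-periodic, $a(a+e)<0$, and there exists $k\in\mathbb{Z}$ with $\int_0^\omega\alpha_3(s)\,ds=2\pi k$. Then the solution $$x(t)=\sqrt{-a(a+e)}\sin\Big(\int_0^t\alpha_3(s)ds\Big),\ y(t)=\sqrt{-a(a+e)}\cos\Big(\int_0^t\alpha_3(s)ds\Big),\ z(t)=-a$$ of the system $$\begin{aligned}\dot x&=(ax+xz)(1+\alpha_1(t))+x(a+z)\alpha_2(t)+y\alpha_3(t),\\ \dot y&=(ay+yz)(1+\alpha_1(t))+y(a+z)\alpha_2(t)-x\alpha_3(t),\\ \dot z&=(ez-x^2-y^2-z^2)(1+\alpha_1(t)+\alpha_2(t))\end{aligned}$$ is $\omega$-periodic (the period not necessarily minimal). (ii) Suppose $\alpha_3(t)+a^4\alpha_4(t)$ is $\omega$-periodic and there exists $k\in\mathbb{Z}$ with $\int_0^\omega(\alpha_3(s)+a^4\alpha_4(s))\,ds=2\pi k$. Then the solution $$x(t)=a\sin\Big(\int_0^t(\alpha_3(s)+a^4\alpha_4(s))ds\Big),\ y(t)=a\cos\Big(\int_0^t(\alpha_3(s)+a^4\alpha_4(s))ds\Big),\ z(t)=-a$$ of the system $$\begin{aligned}\dot x&=(ax+xz)(1+\alpha_1(t))+x(a+z)\alpha_2(t)+y\alpha_3(t)-y(x^2+y^2)(4az+x^2+y^2+2z^2)\alpha_4(t),\\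 \dot y&=(ay+yz)(1+\alpha_1(t))+y(a+z)\alpha_2(t)-x\alpha_3(t)+x(x^2+y^2)(4az+x^2+y^2+2z^2)\alpha_4(t),\\ \dot z&=-(2az+x^2+y^2+z^2)(1+\alpha_1(t)+\alpha_2(t))\end{aligned}$$ is $\omega$-periodic (the period not necessarily minimal). *)

(* Defs.v *)
From Stdlib Require Import Reals.
From Coquelicot Require Import Coquelicot.
Open Scope R_scope.

Definition periodic (f : R -> R) (w : R) : Prop := forall t, f (t + w) = f t.

Definition is_solution3 (F : R -> R -> R -> R -> R * R * R)
  (x y z : R -> R) : Prop :=
  forall t,
    let '(fx, fy, fz) := F t (x t) (y t) (z t) in
    is_derive x t fx /\ is_derive y t fy /\ is_derive z t fz.

Definition sys1 (a e : R) (al1 al2 al3 : R -> R) (t x y z : R) : R * R * R :=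
  ( (a*x + x*z)*(1 + al1 t) + x*(a+z)*al2 t + y*al3 t,
    (a*y + y*z)*(1 + al1 t) + y*(a+z)*al2 t - x*al3 t,
    (e*z - x^2 - y^2 - z^2)*(1 + al1 t + al2 t) ).

Definition sys2 (a : R) (al1 al2 al3 al4 : R -> R) (t x y z : R) : R * R * R :=
  ( (a*x + x*z)*(1 + al1 t) + x*(a+z)*al2 t + y*al3 t
      - y*(x^2+y^2)*(4*a*z + x^2 + y^2 + 2*z^2)*al4 t,
    (a*y + y*z)*(1 + al1 t) + y*(a+z)*al2 t - x*al3 t
      + x*(x^2+y^2)*(4*a*z + x^2 + y^2 + 2*z^2)*al4 t,
    - (2*a*z + x^2 + y^2 + z^2)*(1 + al1 t + al2 t) ).

(* Main.v *)
Require Import Defs.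
From Stdlib Require Import Reals Lra.
From Coquelicot Require Import Coquelicot.
Open Scope R_scope.

Lemma sincos_2PIk (k : Z) : sin (2 * PI * IZR k) = 0 /\ cos (2 * PI * IZR k) = 1.
Proof.
  assert (H : sin (PI * IZR k) = 0) by (apply sin_eq_0_1; exists k; ring).
  split.
  - replace (2 * PI * IZR k) with (2 * (PI * IZR k)) by ring.
    rewrite sin_2a, H; ring.
  - replace (2 * PI * IZR k) with (2 * (PI * IZR k)) by ring.
    rewrite cos_2a_sin, H; ring.
Qed.

Lemma RInt_shift (f : R -> R) (w t : R) (hc : forall t, continuous f t)
  (hp : forall t, f (t + w) = f t) :
  RInt f 0 (t + w) = RInt f 0 w + RInt f 0 t.
Proof.
  assert (ex : forall a b, ex_RInt f a b) by
    (intros; apply (@ex_RInt_continuous R_CompleteNormedModule); intros; apply hc).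
  rewrite <- (RInt_Chasles f 0 w (t + w)) by auto.
  change (RInt f 0 w + RInt f w (t + w) = RInt f 0 w + RInt f 0 t); f_equal.
  pose proof (RInt_comp_lin f 1 w 0 t) as E.
  replace (1 * 0 + w) with w in E by ring.
  replace (1 * t + w) with (t + w) in E by ring.
  rewrite <- E by auto.
  apply RInt_ext; intros y _.
  change (scal 1 (f (1 * y + w)) = f y) with (1 * f (1 * y + w) = f y). rewrite Rmult_1_l. replace (1 * y + w) with (y + w) by ring. apply hp.
Qed.

Lemma deriv_RInt (f : R -> R) (hc : forall t, continuous f t) t :
  is_derive (RInt f 0) t (f t).
Proof.
  apply (is_derive_RInt f (RInt f 0) 0); [|apply hc].
  apply filter_forall; intros; apply (@RInt_correct R_CompleteNormedModule).
  apply (@ex_RInt_continuous R_CompleteNormedModule); intros; apply hc.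
Qed.

Lemma periodic_sc (f : R -> R) (w r : R) (hc : forall t, continuous f t)
  (hp : forall t, f (t + w) = f t) (k : Z) (hk : RInt f 0 w = 2 * PI * IZR k) :
  periodic (fun t => r * sin (RInt f 0 t)) w /\ periodic (fun t => r * cos (RInt f 0 t)) w.
Proof.
  destruct (sincos_2PIk k) as [s c].
  split; intro t; rewrite RInt_shift, hk by auto.
  - rewrite sin_plus, s, c; ring.
  - rewrite cos_plus, s, c; ring.
Qed.

Lemma deriv_sin (f : R -> R) (hc : forall t, continuous f t) r t :
  is_derive (fun t => r * sin (RInt f 0 t)) t (r * cos (RInt f 0 t) * f t).
Proof.
  replace (r * cos (RInt f 0 t) * f t) with (r * (scal (f t) (cos (RInt f 0 t)))).
  2:{ unfold scal; simpl; unfold mult; simpl. ring. }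
  apply is_derive_scal; apply (@is_derive_comp R_AbsRing R_NormedModule sin (RInt f 0)); [apply is_derive_sin | apply deriv_RInt; auto].
Qed.

Lemma deriv_cos (f : R -> R) (hc : forall t, continuous f t) r t :
  is_derive (fun t => r * cos (RInt f 0 t)) t (- (r * sin (RInt f 0 t)) * f t).
Proof.
  replace (- (r * sin (RInt f 0 t)) * f t) with (r * (scal (f t) (- sin (RInt f 0 t)))).
  2:{ unfold scal; simpl; unfold mult; simpl. ring. }
  apply is_derive_scal; apply (@is_derive_comp R_AbsRing R_NormedModule cos (RInt f 0)); [apply is_derive_cos | apply deriv_RInt; auto].
Qed.

Lemma is_derive_eq (f : R -> R) (x l lp : R) : is_derive f x l -> @eq R l lp -> is_derive f x lp.
Proof. intros H ->; exact H. Qed.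

Lemma sc1 th : sin th ^ 2 = 1 - cos th ^ 2.
Proof. pose proof (sin2_cos2 th) as H. unfold Rsqr in H. nra. Qed.

Theorem theorem6 (a e w : R) (al1 al2 al3 al4 : R -> R)
  (hw : 0 < w)
  (c1 : forall t, continuous al1 t) (c2 : forall t, continuous al2 t)
  (c3 : forall t, continuous al3 t) (c4 : forall t, continuous al4 t) :
  (* (i) *)
  (periodic al3 w -> a * (a + e) < 0 ->
   (exists k : Z, RInt al3 0 w = 2 * PI * IZR k) ->
   let x := fun t => sqrt (- (a * (a + e))) * sin (RInt al3 0 t) in
   let y := fun t => sqrt (- (a * (a + e))) * cos (RInt al3 0 t) in
   let z := fun _ : R => - a in
   is_solution3 (sys1 a e al1 al2 al3) x y z /\
   periodic x w /\ periodic y w /\ periodic z w)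
  /\
  (* (ii) *)
  (let b := fun s => al3 s + a ^ 4 * al4 s in
   periodic b w ->
   (exists k : Z, RInt b 0 w = 2 * PI * IZR k) ->
   let x := fun t => a * sin (RInt b 0 t) in
   let y := fun t => a * cos (RInt b 0 t) in
   let z := fun _ : R => - a in
   is_solution3 (sys2 a al1 al2 al3 al4) x y z /\
   periodic x w /\ periodic y w /\ periodic z w).
Proof.
  split.
  - intros hp ha [k hk] x y z.
    set (r := sqrt (- (a * (a + e)))).
    assert (Hr : r * r = - (a * (a + e))) by (apply sqrt_sqrt; lra).
    destruct (periodic_sc al3 w r c3 hp k hk) as [px py].
    split; [| split; [exact px | split; [exact py | intro t; reflexivity]]].
    intro t. unfold sys1, x, y, z. cbv beta iota zeta. fold r.
    split; [| split].
    + eapply is_derive_eq; [apply deriv_sin; auto|]. ring.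
    + eapply is_derive_eq; [apply deriv_cos; auto|]. ring.
    + apply (is_derive_eq _ _ 0); [apply (is_derive_const (V := R_NormedModule))|].
      replace ((r * sin (RInt al3 0 t)) ^ 2) with (r * r * (1 - cos (RInt al3 0 t) ^ 2))
        by (rewrite <- sc1; ring).
      replace ((r * cos (RInt al3 0 t)) ^ 2) with (r * r * cos (RInt al3 0 t) ^ 2) by ring.
      rewrite Hr. ring.
  - intros b hp [k hk] x y z.
    assert (cb : forall t, continuous b t).
    { intro t. unfold b.
      apply (continuous_plus (K := R_AbsRing) (V := R_NormedModule) al3 (fun s => a ^ 4 * al4 s)); [apply c3|].
      apply (continuous_scal_r (K := R_AbsRing) (V := R_NormedModule) (a ^ 4) al4); apply c4. }
    destruct (periodic_sc b w a cb hp k hk) as [px py].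
    split; [| split; [exact px | split; [exact py | intro t; reflexivity]]].
    intro t. unfold sys2, x, y, z. cbv beta iota zeta.
    replace ((a * sin (RInt b 0 t)) ^ 2) with (a * a * (1 - cos (RInt b 0 t) ^ 2))
        by (rewrite <- sc1; ring).
    split; [| split].
    + eapply is_derive_eq; [apply deriv_sin; auto|]. unfold b. ring.
    + eapply is_derive_eq; [apply deriv_cos; auto|].
      replace (a * sin (RInt b 0 t)) with (a * sin (RInt b 0 t)) by reflexivity.
      unfold b. ring_simplify.
      replace (sin (RInt (fun s : R => al3 s + a ^ 4 * al4 s) 0 t) ^ 2) with
        (1 - cos (RInt (fun s : R => al3 s + a ^ 4 * al4 s) 0 t) ^ 2) by (rewrite sc1; ring).
      ring.
    + apply (is_derive_eq _ _ 0); [apply (is_derive_const (V := R_NormedModule))|]. ring.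
Qed.
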